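(* Let $H:\mathbb{R}/\mathbb{Z}\times\mathbb{D}\to\mathbb{R}$ be smooth, vanishing on $\mathbb{R}/\mathbb{Z}\times\partial\mathbb{D}$, generating the symplectic isotopy $\tilde\varphi$, and suppose that the Hamiltonian vector field $X_{H^t}$ restricted to $\partial\mathbb{D}$ is independent of $t$ and that the rotation number on the boundary satisfies $|\rho(\tilde\varphi|_{\partial\mathbb{D}})|<1$. Let $H_n$ be defined, in polar coordinates $(r,\theta)$, by $H_n(t,1+r,\theta)=H(t,1+\rho_n(r),\theta)$ (with $H_n=H$ on $\mathbb{D}$), where $H$ also denotes a fixed smooth extension of $H$ to $\mathbb{R}/\mathbb{Z}\times\mathbb{R}^2$ and $\rho_n:\mathbb{R}\to\mathbb{R}$ are smooth functions with $\rho_n(r)=r$ for $r\le0$, $\rho_n(r)=0$ for $r\ge1/n$, and on $r\ge0$: $\rho_n\ge0$, $|\rho_n'|\le1$, $|\rho_n|\le1/n$, together with $\rho_n'(r)\ge-1/n$ for all $r$. Then for all sufficiently large $n$, every trajectory $x_n:[0,1]\to\mathbb{R}^2$ of $X_{H_n}$ whose image lies in $\mathbb{R}^2\setminus\dot{\mathbb{D}}$ satisfies $|\mathrm{wind}(x_n)|<1$.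
   Context: $\mathbb{D}\subset\mathbb{R}^2$ is the closed unit disc, $\dot{\mathbb{D}}$ its interior, $\omega=dx\wedge dy$. Hamiltonian vector fields are defined by $\iota_{X_{H^t}}\omega=dH^t$, and $\tilde\varphi=\{\varphi_t\}$ is the flow $\frac{d}{dt}\varphi_t=X_{H^t}\circ\varphi_t$, $\varphi_0=\mathrm{id}$, which preserves $\mathbb{D}$. The rotation number $\rho(\tilde\varphi|_{\partial\mathbb{D}})$ is the rotation number (in full turns) of the lift of $\varphi_1|_{\partial\mathbb{D}}$ determined by the isotopy. If $x(t)=r(t)e^{i\theta(t)}$ with $\theta$ continuous, then $\mathrm{wind}(x)=(\theta(1)-\theta(0))/2\pi$. *)

(* Defs.v *)
From Stdlib Require Import Reals Lra.
From Coquelicot Require Import Coquelicot.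
Open Scope R_scope.

(** Points of R^2 are pairs (x, y); a time-dependent function on R^2 is
    written H : R -> R -> R -> R, as H t x y. *)

Definition rad (x y : R) : R := sqrt (x ^ 2 + y ^ 2).

Definition continuous3 (f : R -> R -> R -> R) : Prop :=
  forall t x y,
    continuous (fun p : R * R * R => f (fst (fst p)) (snd (fst p)) (snd p)) (t, x, y).

Definition d_t (f : R -> R -> R -> R) : R -> R -> R -> R :=
  fun t x y => Derive (fun s => f s x y) t.
Definition d_x (f : R -> R -> R -> R) : R -> R -> R -> R :=
  fun t x y => Derive (fun s => f t s y) x.
Definition d_y (f : R -> R -> R -> R) : R -> R -> R -> R :=
  fun t x y => Derive (fun s => f t x s) y.

Fixpoint Ck3 (k : nat) (f : R -> R -> R -> R) : Prop :=
  match k with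
  | O => continuous3 f
  | S k' =>
      continuous3 f /\
      (forall t x y, ex_derive (fun s => f s x y) t /\
                     ex_derive (fun s => f t s y) x /\
                     ex_derive (fun s => f t x s) y) /\
      Ck3 k' (d_t f) /\ Ck3 k' (d_x f) /\ Ck3 k' (d_y f)
  end.

Definition smooth3 (f : R -> R -> R -> R) : Prop := forall k, Ck3 k f.

Definition smooth1 (f : R -> R) : Prop := forall k x, ex_derive_n f k x.

(** Hamiltonian vector field: iota_X (dx /\ dy) = dH gives X = (dH/dy, -dH/dx). *)
Definition XH1 (H : R -> R -> R -> R) (t x y : R) : R := d_y H t x y.
Definition XH2 (H : R -> R -> R -> R) (t x y : R) : R := - d_x H t x y.

Definition cont_on01 (f : R -> R) : Prop :=
  forall t, 0 <= t <= 1 -> forall eps, 0 < eps ->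
    exists d, 0 < d /\ forall s, 0 <= s <= 1 -> Rabs (s - t) < d ->
      Rabs (f s - f t) < eps.

(** x = (x1, x2) : [0,1] -> R^2 is a trajectory of X_H: continuous on [0,1],
    and x' = X_{H^t}(x) on (0,1) (this class contains all classical
    trajectories on [0,1]). *)
Definition trajectory01 (H : R -> R -> R -> R) (x1 x2 : R -> R) : Prop :=
  cont_on01 x1 /\ cont_on01 x2 /\
  forall t, 0 < t < 1 ->
    is_derive x1 t (XH1 H t (x1 t) (x2 t)) /\
    is_derive x2 t (XH2 H t (x1 t) (x2 t)).

Definition is_wind (x1 x2 : R -> R) (w : R) : Prop :=
  exists theta : R -> R, cont_on01 theta /\
    (forall t, 0 <= t <= 1 ->
       x1 t = rad (x1 t) (x2 t) * cos (theta t) /\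
       x2 t = rad (x1 t) (x2 t) * sin (theta t)) /\
    w = (theta 1 - theta 0) / (2 * PI).

(** Rotation number (in full turns) of the lift of phi_1 restricted to the
    boundary circle determined by the isotopy.  Since H is 1-periodic,
    phi_n = (phi_1)^n, so F^n(a) - a (F the lift) is the angular displacement
    (in turns) of the isotopy trajectory on [0,n]; the rotation number is the
    limit of (F^n(a) - a)/n. *)
Definition is_boundary_rotation_number (H : R -> R -> R -> R) (rho : R) : Prop :=
  forall (y1 y2 theta : R -> R),
    (forall t, is_derive y1 t (XH1 H t (y1 t) (y2 t)) /\
               is_derive y2 t (XH2 H t (y1 t) (y2 t))) ->
    (forall t, continuous theta t) ->
    (forall t, y1 t = cos (theta t) /\ y2 t = sin (theta t)) ->
    is_lim_seq (fun n : nat => (theta (INR n) - theta 0) / (2 * PI * INR n)) rho.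

Definition Hn (rhon : R -> R) (H : R -> R -> R -> R) : R -> R -> R -> R :=
  fun t x y =>
    let r := rad x y in
    if Rle_dec r 1 then H t x y
    else let c := (1 + rhon (r - 1)) / r in H t (c * x) (c * y).

(* Main.v *)
Require Import Defs.
From Stdlib Require Import Reals.
From Coquelicot Require Import Coquelicot.
Open Scope R_scope.
From Stdlib Require Import Lra Lia Classical ClassicalEpsilon Ranalysis5.

Lemma ball_R (a b d : R) : ball a d b <-> Rabs (b - a) < d.
Proof. unfold ball; simpl; unfold AbsRing_ball, abs, minus, plus, opp; simpl. tauto. Qed.

Lemma cont3_eps (F : R -> R -> R -> R) : continuous3 F ->
  forall t x y eps, 0 < eps -> exists d, 0 < d /\ forall t' x' y',
    Rabs (t' - t) < d -> Rabs (x' - x) < d -> Rabs (y' - y) < d ->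
    Rabs (F t' x' y' - F t x y) < eps.
Proof.
  intros HF t x y eps Heps.
  specialize (HF t x y).
  assert (Hb : locally (F t x y) (ball (F t x y) (mkposreal eps Heps))) by apply locally_ball.
  specialize (HF _ Hb). simpl in HF.
  destruct HF as [d Hd].
  exists d. split. apply cond_pos.
  intros t' x' y' H1 H2 H3.
  specialize (Hd (t', x', y')).
  apply ball_R. apply Hd.
  split; [split|]; apply ball_R; simpl; assumption.
Qed.


Lemma Rabs_tri3 a b c : Rabs (a - b) <= Rabs (a - c) + Rabs (b - c).
Proof.
  replace (a - b) with ((a - c) + - (b - c)) by ring.
  eapply Rle_trans. apply Rabs_triang. rewrite Rabs_Ropp. lra.
Qed.

Lemma cont3_unif (F : R -> R -> R -> R) : continuous3 F ->
  forall (a b eps : R), 0 < eps -> exists eta, 0 < eta /\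
   forall t x y t' x' y', a <= t <= b -> a <= x <= b -> a <= y <= b ->
    Rabs (t' - t) < eta -> Rabs (x' - x) < eta -> Rabs (y' - y) < eta ->
    Rabs (F t' x' y' - F t x y) < eps.
Proof.
  intros HF a b eps Heps.
  assert (He2 : 0 < eps / 2) by lra.
  assert (Hr : forall z1 z2 z3 : R, {d : R | 0 < d /\ forall t' x' y',
     Rabs (t' - z1) < d -> Rabs (x' - z2) < d -> Rabs (y' - z3) < d ->
     Rabs (F t' x' y' - F z1 z2 z3) < eps / 2}).
  { intros z1 z2 z3. apply constructive_indefinite_description.
    destruct (cont3_eps F HF z1 z2 z3 (eps/2) He2) as [d [Hd1 Hd2]].
    exists d. tauto. }
  set (rr := fun z : Compactness.Tn 3 R => match z with (z1,(z2,(z3,_))) => proj1_sig (Hr z1 z2 z3) end).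
  assert (Hpos : forall z, 0 < rr z / 2).
  { intros [z1 [z2 [z3 []]]]. unfold rr. destruct (Hr z1 z2 z3) as [d Hd]. simpl. lra. }
  set (delta := fun z => mkposreal _ (Hpos z)).
  destruct (compactness_value 3 (a,(a,(a,tt))) (b,(b,(b,tt))) delta) as [d Hd].
  exists d. split. apply cond_pos.
  intros t x y t' x' y' Ht Hx Hy H1 H2 H3.
  specialize (Hd (t,(x,(y,tt)))).
  simpl in Hd.
  apply Rnot_le_lt. intro Hcon.
  apply Hd. { tauto. }
  intros [z [Hzb [Hzc Hdz]]].
  destruct z as [z1 [z2 [z3 []]]].
  simpl in Hzc, Hdz.
  destruct Hzc as [C1 [C2 [C3 _]]].
  unfold rr in C1, C2, C3, Hdz.
  destruct (Hr z1 z2 z3) as [r [Hr0 Hrr]]. simpl in C1, C2, C3, Hdz.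
  assert (A1 : Rabs (F t x y - F z1 z2 z3) < eps/2) by (apply Hrr; lra).
  assert (Rabs (t' - z1) < r).
  { replace (t' - z1) with ((t' - t) + (t - z1)) by ring.
    eapply Rle_lt_trans. apply Rabs_triang. lra. }
  assert (Rabs (x' - z2) < r).
  { replace (x' - z2) with ((x' - x) + (x - z2)) by ring.
    eapply Rle_lt_trans. apply Rabs_triang. lra. }
  assert (Rabs (y' - z3) < r).
  { replace (y' - z3) with ((y' - y) + (y - z3)) by ring.
    eapply Rle_lt_trans. apply Rabs_triang. lra. }
  assert (A2 := Hrr t' x' y' H H0 H4).
  pose proof (Rabs_tri3 (F t' x' y') (F t x y) (F z1 z2 z3)).
  lra.
Qed.
Lemma mvt_bound (h : R -> R) (a b l e : R) :
  (forall s, ex_derive h s) ->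
  (forall c, Rmin a b <= c <= Rmax a b -> Rabs (Derive h c - l) <= e) ->
  Rabs (h b - h a - l * (b - a)) <= e * Rabs (b - a).
Proof.
  intros Hd Hb.
  destruct (MVT_gen h a b (Derive h)) as [c [Hc Heq]].
  - intros; apply Derive_correct; auto.
  - intros x _; apply continuity_pt_filterlim; apply (ex_derive_continuous (K:=R_AbsRing) (V:=R_NormedModule)); auto.
  - rewrite Heq. replace (Derive h c * (b - a) - l * (b - a)) with ((Derive h c - l) * (b - a)) by ring.
    rewrite Rabs_mult. apply Rmult_le_compat_r. apply Rabs_pos. apply Hb; auto.
Qed.

Lemma diff_partials (g : R -> R -> R) x y :
 (forall u v, ex_derive (fun s => g s v) u) ->
 (forall u v, ex_derive (fun s => g u s) v) ->
 (forall eps, 0 < eps -> exists d, 0 < d /\ forall u v, Rabs (u - x) < d -> Rabs (v - y) < d ->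
     Rabs (Derive (fun s => g s v) u - Derive (fun s => g s y) x) < eps /\
     Rabs (Derive (fun s => g u s) v - Derive (fun s => g x s) y) < eps) ->
 differentiable_pt_lim g x y (Derive (fun s => g s y) x) (Derive (fun s => g x s) y).
Proof.
  intros H1 H2 Hc eps.
  destruct (Hc (eps/2)) as [d [Hd0 Hd]]. { pose proof (cond_pos eps). lra. }
  exists (mkposreal d Hd0). simpl. intros u v Hu Hv.
  set (lx := Derive (fun s => g s y) x). set (ly := Derive (fun s => g x s) y).
  assert (A : Rabs (g u v - g x v - lx * (u - x)) <= eps/2 * Rabs (u - x)).
  { apply (mvt_bound (fun s => g s v) x u lx (eps/2)). auto.
    intros c Hc'. assert (Rabs (c - x) < d).
    { apply Rabs_lt_between' in Hu. apply Rabs_lt_between'.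
      unfold Rmin, Rmax in Hc'. destruct (Rle_dec x u); lra. }
    destruct (Hd c v H Hv) as [Hd1 _]. unfold lx; lra. }
  assert (B : Rabs (g x v - g x y - ly * (v - y)) <= eps/2 * Rabs (v - y)).
  { apply (mvt_bound (fun s => g x s) y v ly (eps/2)). auto.
    intros c Hc'. assert (Rabs (c - y) < d).
    { apply Rabs_lt_between' in Hv. apply Rabs_lt_between'.
      unfold Rmin, Rmax in Hc'. destruct (Rle_dec y v); lra. }
    assert (Rabs (x - x) < d) by (rewrite Rminus_diag, Rabs_R0; lra).
    destruct (Hd x c H0 H) as [_ Hd2]. unfold ly; lra. }
  replace (g u v - g x y - (lx * (u - x) + ly * (v - y))) with
    ((g u v - g x v - lx * (u - x)) + (g x v - g x y - ly * (v - y))) by ring.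
  eapply Rle_trans. apply Rabs_triang.
  pose proof (Rmax_l (Rabs (u - x)) (Rabs (v - y))).
  pose proof (Rmax_r (Rabs (u - x)) (Rabs (v - y))).
  pose proof (cond_pos eps).
  assert (eps / 2 * Rabs (u - x) <= eps/2 * Rmax (Rabs (u - x)) (Rabs (v - y))) by (apply Rmult_le_compat_l; lra).
  assert (eps / 2 * Rabs (v - y) <= eps/2 * Rmax (Rabs (u - x)) (Rabs (v - y))) by (apply Rmult_le_compat_l; lra).
  lra.
Qed.

Lemma cpt_eps (a : R -> R) s : continuity_pt a s -> forall e, 0 < e ->
  exists d, 0 < d /\ forall u, Rabs (u - s) < d -> Rabs (a u - a s) < e.
Proof.
  intros Ha e He. destruct (Ha e He) as [d [Hd Hd']].
  exists d; split; auto. intros u Hu.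
  destruct (Req_dec u s) as [->|Hne]. rewrite Rminus_diag, Rabs_R0; auto.
  apply Hd'. split. split. exact I. auto. exact Hu.
Qed.

Lemma eps_cpt (a : R -> R) s : (forall e, 0 < e ->
  exists d, 0 < d /\ forall u, Rabs (u - s) < d -> Rabs (a u - a s) < e) -> continuity_pt a s.
Proof.
  intros Ha e He. destruct (Ha e He) as [d [Hd Hd']].
  exists d; split; auto. intros u [_ Hu]. apply Hd'. exact Hu.
Qed.

Lemma cont3_comp (F : R -> R -> R -> R) (a b c : R -> R) s :
  continuous3 F -> continuity_pt a s -> continuity_pt b s -> continuity_pt c s ->
  continuity_pt (fun u => F (a u) (b u) (c u)) s.
Proof.
  intros HF Ha Hb Hc. apply eps_cpt. intros e He.
  destruct (cont3_eps F HF (a s) (b s) (c s) e He) as [d [Hd HFd]].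
  destruct (cpt_eps a s Ha d Hd) as [d1 [Hd1 H1]].
  destruct (cpt_eps b s Hb d Hd) as [d2 [Hd2 H2]].
  destruct (cpt_eps c s Hc d Hd) as [d3 [Hd3 H3]].
  exists (Rmin d1 (Rmin d2 d3)). split.
  apply Rmin_pos; auto; apply Rmin_pos; auto.
  intros u Hu. apply HFd.
  apply H1. eapply Rlt_le_trans. exact Hu. apply Rmin_l.
  apply H2. eapply Rlt_le_trans. exact Hu. eapply Rle_trans. apply Rmin_r. apply Rmin_l.
  apply H3. eapply Rlt_le_trans. exact Hu. eapply Rle_trans. apply Rmin_r. apply Rmin_r.
Qed.

Lemma C1_diff (F : R -> R -> R -> R) : Ck3 1 F -> forall t x y,
  differentiable_pt_lim (F t) x y (d_x F t x y) (d_y F t x y).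
Proof.
  intros [HF [Hex [_ [Hx Hy]]]] t x y.
  apply (diff_partials (F t) x y).
  - intros u v. apply (Hex t u v).
  - intros u v. apply (Hex t u v).
  - intros eps Heps.
    destruct (cont3_eps _ Hx t x y eps Heps) as [d1 [Hd1 H1]].
    destruct (cont3_eps _ Hy t x y eps Heps) as [d2 [Hd2 H2]].
    exists (Rmin d1 d2). split. apply Rmin_pos; auto.
    intros u v Hu Hv.
    assert (Rabs (t - t) < d1) by (rewrite Rminus_diag, Rabs_R0; auto).
    assert (Rabs (t - t) < d2) by (rewrite Rminus_diag, Rabs_R0; auto).
    pose proof (Rmin_l d1 d2). pose proof (Rmin_r d1 d2).
    split.
    + apply (H1 t u v); auto; lra.
    + apply (H2 t u v); auto; lra.
Qed.

Lemma circ_deriv (G : R -> R -> R) th gx gy :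
  differentiable_pt_lim G (cos th) (sin th) gx gy ->
  is_derive (fun s => G (cos s) (sin s)) th (gx * (- sin th) + gy * cos th).
Proof.
  intros HG. apply is_derive_Reals.
  apply (derivable_pt_lim_comp_2d G cos sin th gx gy (- sin th) (cos th) HG).
  apply derivable_pt_lim_cos. apply derivable_pt_lim_sin.
Qed.

Lemma rad_circ th : rad (cos th) (sin th) = 1.
Proof.
  unfold rad. replace (cos th ^ 2 + sin th ^ 2) with 1. apply sqrt_1.
  pose proof (sin2_cos2 th). unfold Rsqr in H. simpl. lra.
Qed.

Definition goodg (g : R -> R) := (forall x, continuity_pt g x) /\ (forall x, 0 < g x) /\
  (forall x, g (x + 2*PI) = g x).

Definition Gg (g : R -> R) (x : R) : R := RInt (fun u => / g u) 0 x.

Lemma goodg_inv_cont g : goodg g -> forall x, continuity_pt (fun u => / g u) x.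
Proof.
  intros [Hc [Hp _]] x. apply continuity_pt_inv. apply Hc. apply Rgt_not_eq, Hp.
Qed.

Lemma goodg_exRInt g : goodg g -> forall a b, ex_RInt (fun u => / g u) a b.
Proof.
  intros Hg a b. apply (ex_RInt_continuous (V:=R_CompleteNormedModule)). intros z _.
  apply continuity_pt_filterlim. apply goodg_inv_cont; auto.
Qed.

Lemma Gg_deriv g : goodg g -> forall x, is_derive (Gg g) x (/ g x).
Proof.
  intros Hg x. unfold Gg.
  apply (is_derive_RInt (fun u => / g u) (fun b => RInt (fun u => / g u) 0 b) 0 x).
  - apply filter_forall. intros b. apply (RInt_correct (V:=R_CompleteNormedModule)). apply goodg_exRInt; auto.
  - apply continuity_pt_filterlim. apply goodg_inv_cont; auto.
Qed.

Lemma Gg_ex_derive g : goodg g -> forall x, ex_derive (Gg g) x.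
Proof. intros Hg x. eexists. apply Gg_deriv; auto. Qed.

Lemma Gg_cont g : goodg g -> forall x, continuity_pt (Gg g) x.
Proof.
  intros Hg x. apply continuity_pt_filterlim.
  apply (ex_derive_continuous (K:=R_AbsRing) (V:=R_NormedModule)). apply Gg_ex_derive; auto.
Qed.

Lemma Gg_incr g : goodg g -> forall x y, x < y -> Gg g x < Gg g y.
Proof.
  intros Hg x y Hxy.
  destruct (MVT_gen (Gg g) x y (fun u => / g u)) as [c [_ Hc]].
  - intros; apply Gg_deriv; auto.
  - intros; apply Gg_cont; auto.
  - destruct Hg as [_ [Hp _]]. pose proof (Hp c).
    assert (0 < / g c) by (apply Rinv_0_lt_compat; auto).
    assert (0 < / g c * (y - x)) by (apply Rmult_lt_0_compat; lra). lra.
Qed.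

Lemma Gg_le g : goodg g -> forall x y, x <= y -> Gg g x <= Gg g y.
Proof.
  intros Hg x y [H|H]. left; apply Gg_incr; auto. subst; lra.
Qed.

Lemma Gg_shift g : goodg g -> forall x, Gg g (x + 2*PI) = Gg g x + Gg g (2*PI).
Proof.
  intros Hg x.
  destruct (MVT_gen (fun u => Gg g (u + 2*PI) - Gg g u) 0 x (fun _ => 0)) as [c [_ Hc]].
  - intros u _. replace 0 with (@scal R_AbsRing R_NormedModule 1 (/ g (u + 2*PI)) - / g u).
    apply (is_derive_minus (K:=R_AbsRing) (V:=R_NormedModule)).
    apply (is_derive_comp (Gg g) (fun v => v + 2*PI)). apply Gg_deriv; auto.
    auto_derive; auto; ring.
    apply Gg_deriv; auto.
    destruct Hg as [_ [_ Hper]]. rewrite Hper. unfold scal; simpl; unfold mult; simpl. ring.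
  - intros u _. apply continuity_pt_minus.
    apply (continuity_pt_comp (fun v => v + 2*PI) (Gg g)).
    apply continuity_pt_plus. apply continuity_pt_id. apply continuity_pt_const. intros ? ?; auto.
    apply Gg_cont; auto. apply Gg_cont; auto.
  - rewrite Rplus_0_l in Hc. assert (Gg g 0 = 0) by (unfold Gg; rewrite RInt_point; reflexivity). lra.
Qed.

Lemma cont01_comp (G th : R -> R) : (forall x, continuity_pt G x) -> cont_on01 th ->
  cont_on01 (fun t => G (th t)).
Proof.
  intros HG Hth t Ht eps Heps.
  destruct (cpt_eps G (th t) (HG (th t)) eps Heps) as [d1 [Hd1 H1]].
  destruct (Hth t Ht d1 Hd1) as [d2 [Hd2 H2]].
  exists d2. split; auto.
Qed.

Lemma lip1_01 (Phi dPhi : R -> R) :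
  cont_on01 Phi ->
  (forall t, 0 < t < 1 -> is_derive Phi t (dPhi t) /\ Rabs (dPhi t) <= 1) ->
  Rabs (Phi 1 - Phi 0) <= 1.
Proof.
  intros Hc Hd.
  assert (Hab : forall a b, 0 < a -> a < b -> b < 1 -> Rabs (Phi b - Phi a) <= 1).
  { intros a b Ha Hab Hb.
    destruct (MVT_gen Phi a b dPhi) as [c [Hc1 Hc2]].
    - intros x Hx. rewrite Rmin_left in Hx by lra. rewrite Rmax_right in Hx by lra.
      apply Hd; lra.
    - intros x Hx. rewrite Rmin_left in Hx by lra. rewrite Rmax_right in Hx by lra.
      apply continuity_pt_filterlim.
      apply (ex_derive_continuous (K:=R_AbsRing) (V:=R_NormedModule)).
      eexists. apply Hd; lra.
    - rewrite Hc2. rewrite Rmin_left in Hc1 by lra. rewrite Rmax_right in Hc1 by lra.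
      rewrite Rabs_mult. destruct (Hd c ltac:(lra)) as [_ Hc3].
      rewrite (Rabs_right (b - a)) by lra.
      assert (Rabs (dPhi c) * (b - a) <= 1 * (b - a)) by (apply Rmult_le_compat_r; lra). lra. }
  apply Rnot_lt_le. intro Hlt.
  set (eps := (Rabs (Phi 1 - Phi 0) - 1) / 3).
  assert (Heps : 0 < eps) by (unfold eps; lra).
  destruct (Hc 0 ltac:(lra) eps Heps) as [d0 [Hd0 H0]].
  destruct (Hc 1 ltac:(lra) eps Heps) as [d1 [Hd1 H1]].
  set (a := Rmin (d0/2) (1/4)). set (b := 1 - Rmin (d1/2) (1/4)).
  assert (0 < a /\ a <= 1/4 /\ a < d0).
  { unfold a. pose proof (Rmin_l (d0/2) (1/4)). pose proof (Rmin_r (d0/2) (1/4)).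
    split. apply Rmin_pos; lra. lra. }
  assert (3/4 <= b /\ b < 1 /\ 1 - b < d1).
  { unfold b. pose proof (Rmin_l (d1/2) (1/4)). pose proof (Rmin_r (d1/2) (1/4)).
    assert (0 < Rmin (d1/2) (1/4)) by (apply Rmin_pos; lra). lra. }
  assert (A0 : Rabs (Phi a - Phi 0) < eps).
  { apply H0. lra. rewrite Rminus_0_r, Rabs_right; lra. }
  assert (A1 : Rabs (Phi b - Phi 1) < eps).
  { apply H1. lra. rewrite Rabs_left; lra. }
  assert (A2 := Hab a b ltac:(lra) ltac:(lra) ltac:(lra)).
  assert (Rabs (Phi 1 - Phi 0) <= Rabs (Phi b - Phi 1) + Rabs (Phi b - Phi a) + Rabs (Phi a - Phi 0)).
  { replace (Phi 1 - Phi 0) with (- (Phi b - Phi 1) + (Phi b - Phi a) + (Phi a - Phi 0)) by ring.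
    eapply Rle_trans. apply Rabs_triang. rewrite Rabs_triang_inv2 || idtac.
    eapply Rle_trans. apply Rplus_le_compat_r. apply Rabs_triang. rewrite Rabs_Ropp. lra. }
  unfold eps in *. lra.
Qed.

Lemma final_wind (g th dth : R -> R) :
  goodg g -> 1 < Gg g (2*PI) -> cont_on01 th ->
  (forall t, 0 < t < 1 -> is_derive th t (dth t) /\ Rabs (dth t) <= g (th t)) ->
  Rabs (th 1 - th 0) < 2*PI.
Proof.
  intros Hg HP Hc Hd.
  assert (HL : Rabs (Gg g (th 1) - Gg g (th 0)) <= 1).
  { apply (lip1_01 (fun t => Gg g (th t)) (fun t => dth t * / g (th t))).
    - apply cont01_comp; auto. apply Gg_cont; auto.
    - intros t Ht. destruct (Hd t Ht) as [H1 H2]. split.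
      + apply (is_derive_comp (Gg g) th t (/ g (th t)) (dth t)). apply Gg_deriv; auto. auto.
      + destruct Hg as [_ [Hp _]]. pose proof (Hp (th t)).
        rewrite Rabs_mult, Rabs_inv, (Rabs_right (g (th t))) by lra.
        apply (Rmult_le_reg_r (g (th t))). lra.
        rewrite Rmult_assoc, Rinv_l by lra. lra. }
  apply Rabs_lt_between'. split.
  - apply Rnot_le_lt. intro Hle.
    assert (Gg g (th 1 + 2*PI) <= Gg g (th 0)) by (apply Gg_le; auto; lra).
    rewrite Gg_shift in H by auto.
    apply Rabs_le_between' in HL. lra.
  - apply Rnot_le_lt. intro Hle.
    assert (Gg g (th 0 + 2*PI) <= Gg g (th 1)) by (apply Gg_le; auto; lra).
    rewrite Gg_shift in H by auto.
    apply Rabs_le_between' in HL. lra.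
Qed.

Lemma lift_deriv (x1 x2 th : R -> R) t a1 a2 :
  is_derive x1 t a1 -> is_derive x2 t a2 -> continuity_pt th t ->
  (exists d, 0 < d /\ forall s, Rabs (s - t) < d -> 0 < rad (x1 s) (x2 s) /\
     x1 s = rad (x1 s) (x2 s) * cos (th s) /\ x2 s = rad (x1 s) (x2 s) * sin (th s)) ->
  is_derive th t ((x1 t * a2 - x2 t * a1) / (rad (x1 t) (x2 t)) ^ 2).
Proof.
  intros H1 H2 Hc [d [Hd Hrep]].
  set (c0 := cos (th t)). set (s0 := sin (th t)).
  set (u := fun s => x1 s * c0 + x2 s * s0).
  set (v := fun s => - x1 s * s0 + x2 s * c0).
  destruct (Hrep t) as [HR [E1 E2]]. rewrite Rminus_diag, Rabs_R0; auto.
  set (R0 := rad (x1 t) (x2 t)) in *.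
  assert (Hcs : c0 ^ 2 + s0 ^ 2 = 1).
  { unfold c0, s0. pose proof (sin2_cos2 (th t)). unfold Rsqr in H. simpl. lra. }
  assert (Hu0 : u t = R0). { unfold u. rewrite E1, E2. fold c0 s0. nra. }
  assert (Hv0 : v t = 0). { unfold v. rewrite E1, E2. fold c0 s0. ring. }
  assert (PI2 : 0 < PI / 2) by (pose proof PI_RGT_0; lra).
  destruct (cpt_eps th t Hc (PI/2) PI2) as [d' [Hd' Hth]].
  assert (Hloc : locally t (fun s => th t + atan (v s / u s) = th s)).
  { assert (0 < Rmin d d') by (apply Rmin_pos; auto).
    exists (mkposreal _ H). intros s Hs. apply ball_R in Hs. simpl in Hs.
    assert (Hs1 : Rabs (s - t) < d) by (eapply Rlt_le_trans; [exact Hs| apply Rmin_l]).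
    assert (Hs2 : Rabs (s - t) < d') by (eapply Rlt_le_trans; [exact Hs| apply Rmin_r]).
    specialize (Hth s Hs2). destruct (Hrep s Hs1) as [HRs [F1 F2]].
    set (al := th s - th t). set (r := rad (x1 s) (x2 s)) in *.
    assert (Hal : - (PI/2) < al < PI/2) by (apply Rabs_lt_between; exact Hth).
    assert (Hcal : 0 < cos al) by (apply cos_gt_0; lra).
    assert (Hus : u s = r * cos al).
    { unfold u, al. rewrite cos_minus. rewrite F1, F2. fold c0 s0. ring. }
    assert (Hvs : v s = r * sin al).
    { unfold v, al. rewrite sin_minus. rewrite F1, F2. fold c0 s0. ring. }
    rewrite Hus, Hvs.
    replace (r * sin al / (r * cos al)) with (tan al).
    rewrite atan_tan by lra. unfold al. ring.
    unfold tan. field. lra. }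
  eapply is_derive_ext_loc. exact Hloc.
  unfold u, v in *. auto_derive.
  - repeat split; try (eexists; eassumption). lra.
  - replace (Derive (fun x => x1 x) t) with a1 by (symmetry; apply is_derive_unique; exact H1).
    replace (Derive (fun x => x2 x) t) with a2 by (symmetry; apply is_derive_unique; exact H2).
    rewrite Hu0, Hv0. rewrite E1, E2. fold c0 s0. field. lra.
Qed.

Lemma rad_pos_sq X Y : 0 < rad X Y -> 0 < X ^ 2 + Y ^ 2.
Proof.
  unfold rad. intros H. destruct (Rle_lt_dec (X ^ 2 + Y ^ 2) 0) as [Hle|Hlt]; auto.
  rewrite sqrt_neg_0 in H; lra.
Qed.

Lemma rad_sq X Y : rad X Y * rad X Y = X ^ 2 + Y ^ 2.
Proof. unfold rad. apply sqrt_sqrt. nra. Qed.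

Lemma rad_dx X Y : 0 < rad X Y -> is_derive (fun s => rad s Y) X (X / rad X Y).
Proof.
  intros H. pose proof (rad_pos_sq X Y H). unfold rad in *.
  auto_derive. lra. replace (X * (X * 1) + Y * (Y * 1)) with (X ^ 2 + Y ^ 2) by ring. field. apply Rgt_not_eq, sqrt_lt_R0; lra.
Qed.

Lemma rad_dy X Y : 0 < rad X Y -> is_derive (fun s => rad X s) Y (Y / rad X Y).
Proof.
  intros H. pose proof (rad_pos_sq X Y H). unfold rad in *.
  auto_derive. lra. replace (X * (X * 1) + Y * (Y * 1)) with (X ^ 2 + Y ^ 2) by ring. field. apply Rgt_not_eq, sqrt_lt_R0; lra.
Qed.

Lemma partial_x_comp (G : R -> R -> R) (phi : R -> R) X Y gx gy dphi :
  differentiable_pt_lim G (phi (rad X Y) * X) (phi (rad X Y) * Y) gx gy ->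
  is_derive phi (rad X Y) dphi -> 0 < rad X Y ->
  is_derive (fun s => G (phi (rad s Y) * s) (phi (rad s Y) * Y)) X
    (gx * (dphi * (X / rad X Y) * X + phi (rad X Y)) + gy * (dphi * (X / rad X Y) * Y)).
Proof.
  intros HG Hphi Hr.
  assert (Hc : is_derive (fun s => phi (rad s Y)) X (X / rad X Y * dphi)).
  { exact (is_derive_comp phi (fun s => rad s Y) X dphi (X / rad X Y) Hphi (rad_dx X Y Hr)). }
  apply is_derive_Reals.
  apply (derivable_pt_lim_comp_2d G (fun s => phi (rad s Y) * s) (fun s => phi (rad s Y) * Y) X gx gy).
  - exact HG.
  - apply is_derive_Reals. auto_derive.
    + repeat split; eexists; [exact Hphi | apply rad_dx; auto].
    + replace (Derive (fun x => rad x Y) X) with (X / rad X Y)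
        by (symmetry; apply is_derive_unique; apply rad_dx; auto).
      replace (Derive (fun x => phi x) (rad X Y)) with dphi
        by (symmetry; apply is_derive_unique; exact Hphi). ring.
  - apply is_derive_Reals. auto_derive.
    + repeat split; eexists; [exact Hphi | apply rad_dx; auto].
    + replace (Derive (fun x => rad x Y) X) with (X / rad X Y)
        by (symmetry; apply is_derive_unique; apply rad_dx; auto).
      replace (Derive (fun x => phi x) (rad X Y)) with dphi
        by (symmetry; apply is_derive_unique; exact Hphi). ring.
Qed.

Lemma partial_y_comp (G : R -> R -> R) (phi : R -> R) X Y gx gy dphi :
  differentiable_pt_lim G (phi (rad X Y) * X) (phi (rad X Y) * Y) gx gy ->
  is_derive phi (rad X Y) dphi -> 0 < rad X Y ->
  is_derive (fun s => G (phi (rad X s) * X) (phi (rad X s) * s)) Y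
    (gx * (dphi * (Y / rad X Y) * X) + gy * (dphi * (Y / rad X Y) * Y + phi (rad X Y))).
Proof.
  intros HG Hphi Hr.
  assert (Hc : is_derive (fun s => phi (rad X s)) Y (Y / rad X Y * dphi)).
  { exact (is_derive_comp phi (fun s => rad X s) Y dphi (Y / rad X Y) Hphi (rad_dy X Y Hr)). }
  apply is_derive_Reals.
  apply (derivable_pt_lim_comp_2d G (fun s => phi (rad X s) * X) (fun s => phi (rad X s) * s) Y gx gy).
  - exact HG.
  - apply is_derive_Reals. auto_derive.
    + repeat split; eexists; [exact Hphi | apply rad_dy; auto].
    + replace (Derive (fun x => rad X x) Y) with (Y / rad X Y)
        by (symmetry; apply is_derive_unique; apply rad_dy; auto).
      replace (Derive (fun x => phi x) (rad X Y)) with dphi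
        by (symmetry; apply is_derive_unique; exact Hphi). ring.
  - apply is_derive_Reals. auto_derive.
    + repeat split; eexists; [exact Hphi | apply rad_dy; auto].
    + replace (Derive (fun x => rad X x) Y) with (Y / rad X Y)
        by (symmetry; apply is_derive_unique; apply rad_dy; auto).
      replace (Derive (fun x => phi x) (rad X Y)) with dphi
        by (symmetry; apply is_derive_unique; exact Hphi). ring.
Qed.

Definition phin (rh : R -> R) (r : R) := (1 + rh (r - 1)) / r.

Lemma Hn_eq (rh : R -> R) H t x y : (forall r, r <= 0 -> rh r = r) -> 0 < rad x y ->
  Hn rh H t x y = H t (phin rh (rad x y) * x) (phin rh (rad x y) * y).
Proof.
  intros Hid Hr. unfold Hn, phin. destruct (Rle_dec (rad x y) 1).
  - rewrite Hid by lra. replace ((1 + (rad x y - 1)) / rad x y) with 1 by (field; lra).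
    rewrite !Rmult_1_l. reflexivity.
  - reflexivity.
Qed.

Lemma rad_zero x y : rad x y = 0 -> x = 0 /\ y = 0.
Proof.
  unfold rad. intros H. apply sqrt_eq_0 in H. split; nra. nra.
Qed.

Lemma rad_ge0 x y : 0 <= rad x y.
Proof. unfold rad. apply sqrt_pos. Qed.

Lemma rad_x0 x : rad x 0 = Rabs x.
Proof. unfold rad. replace (x ^ 2 + 0 ^ 2) with (Rsqr x) by (unfold Rsqr; ring). apply sqrt_Rsqr_abs. Qed.

Lemma rad_0y y : rad 0 y = Rabs y.
Proof. unfold rad. replace (0 ^ 2 + y ^ 2) with (Rsqr y) by (unfold Rsqr; ring). apply sqrt_Rsqr_abs. Qed.

Lemma rad_near_x X Y s : 1 <= rad X Y -> Rabs (s - X) < 1/2 -> 0 < rad s Y.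
Proof.
  intros H1 H2. destruct (rad_ge0 s Y) as [H|H]; auto.
  symmetry in H. apply rad_zero in H. destruct H as [-> ->].
  rewrite rad_x0 in H1. rewrite Rminus_0_l, Rabs_Ropp in H2. lra.
Qed.

Lemma rad_near_y X Y s : 1 <= rad X Y -> Rabs (s - Y) < 1/2 -> 0 < rad X s.
Proof.
  intros H1 H2. destruct (rad_ge0 X s) as [H|H]; auto.
  symmetry in H. apply rad_zero in H. destruct H as [-> ->].
  rewrite rad_0y in H1. rewrite Rminus_0_l, Rabs_Ropp in H2. lra.
Qed.

Lemma phin_deriv (rh : R -> R) r : (forall z, ex_derive rh z) -> 0 < r ->
  is_derive (phin rh) r ((Derive rh (r - 1) * r - (1 + rh (r - 1))) / r ^ 2).
Proof.
  intros Hd Hr. unfold phin. auto_derive.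
  - split. apply Hd. split. lra. auto.
  - replace (r + - (1)) with (r - 1) by ring. change (fun x => rh x) with rh. field. lra.
Qed.

Lemma Hn_radial (rh : R -> R) H t X Y :
  Ck3 1 H -> (forall z, ex_derive rh z) -> (forall r, r <= 0 -> rh r = r) -> 1 <= rad X Y ->
  X * d_x (Hn rh H) t X Y + Y * d_y (Hn rh H) t X Y =
  Derive rh (rad X Y - 1) *
   (X * d_x H t (phin rh (rad X Y) * X) (phin rh (rad X Y) * Y)
  + Y * d_y H t (phin rh (rad X Y) * X) (phin rh (rad X Y) * Y)).
Proof.
  intros HC Hd Hid HR.
  set (R0 := rad X Y).
  assert (HR0 : 0 < R0) by (unfold R0; lra).
  set (p1 := phin rh R0 * X). set (p2 := phin rh R0 * Y).
  set (gx := d_x H t p1 p2). set (gy := d_y H t p1 p2).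
  set (dphi := (Derive rh (R0 - 1) * R0 - (1 + rh (R0 - 1))) / R0 ^ 2).
  assert (Hphi : is_derive (phin rh) R0 dphi) by (apply phin_deriv; auto).
  assert (HG : differentiable_pt_lim (H t) p1 p2 gx gy) by (apply C1_diff; auto).
  assert (Ex : d_x (Hn rh H) t X Y = gx * (dphi * (X / R0) * X + phin rh R0) + gy * (dphi * (X / R0) * Y)).
  { unfold d_x. apply is_derive_unique.
    eapply is_derive_ext_loc.
    2: apply (partial_x_comp (H t) (phin rh) X Y gx gy dphi HG Hphi HR0).
    exists (mkposreal (1/2) ltac:(lra)). intros s Hs. apply ball_R in Hs. simpl in Hs.
    rewrite Hn_eq; auto. apply (rad_near_x X Y); auto. }
  assert (Ey : d_y (Hn rh H) t X Y = gx * (dphi * (Y / R0) * X) + gy * (dphi * (Y / R0) * Y + phin rh R0)).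
  { unfold d_y. apply is_derive_unique.
    eapply is_derive_ext_loc.
    2: apply (partial_y_comp (H t) (phin rh) X Y gx gy dphi HG Hphi HR0).
    exists (mkposreal (1/2) ltac:(lra)). intros s Hs. apply ball_R in Hs. simpl in Hs.
    rewrite Hn_eq; auto. apply (rad_near_y X Y); auto. }
  rewrite Ex, Ey.
  pose proof (rad_sq X Y) as Hsq. fold R0 in Hsq.
  transitivity ((X * gx + Y * gy) * (dphi * (X ^ 2 + Y ^ 2) / R0 + phin rh R0)).
  { field. lra. }
  rewrite <- Hsq. unfold dphi, phin. field. lra.
Qed.

Lemma cont01_interior f t : cont_on01 f -> 0 < t < 1 -> continuity_pt f t.
Proof.
  intros Hf Ht. apply eps_cpt. intros e He.
  destruct (Hf t ltac:(lra) e He) as [d [Hd Hd']].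
  exists (Rmin d (Rmin t (1 - t))). split.
  repeat apply Rmin_pos; lra.
  intros u Hu. apply Hd'.
  - pose proof (Rmin_r d (Rmin t (1 - t))). pose proof (Rmin_l t (1 - t)). pose proof (Rmin_r t (1 - t)).
    apply Rabs_lt_between' in Hu. lra.
  - eapply Rlt_le_trans. exact Hu. apply Rmin_l.
Qed.

Definition fb (H : R -> R -> R -> R) (th : R) :=
  - (cos th * d_x H 0 (cos th) (sin th) + sin th * d_y H 0 (cos th) (sin th)).

Definition dth_of (G : R -> R -> R -> R) (x1 x2 : R -> R) (t : R) :=
  (x1 t * XH2 G t (x1 t) (x2 t) - x2 t * XH1 G t (x1 t) (x2 t)) / (rad (x1 t) (x2 t)) ^ 2.

Lemma traj_bound (H : R -> R -> R -> R) (rh : R -> R) (dl eta : R) (x1 x2 th : R -> R) :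
  Ck3 1 H ->
  (forall t a, d_x H t (cos a) (sin a) = d_x H 0 (cos a) (sin a) /\
               d_y H t (cos a) (sin a) = d_y H 0 (cos a) (sin a)) ->
  (forall z, ex_derive rh z) -> (forall r, r <= 0 -> rh r = r) ->
  (forall r, 0 <= r -> 0 <= rh r /\ rh r < eta /\ Rabs (Derive rh r) <= 1) ->
  (forall t x y t' x' y', -2 <= t <= 2 -> -2 <= x <= 2 -> -2 <= y <= 2 ->
     Rabs (t' - t) < eta -> Rabs (x' - x) < eta -> Rabs (y' - y) < eta ->
     Rabs (d_x H t' x' y' - d_x H t x y) < dl / 2 /\ Rabs (d_y H t' x' y' - d_y H t x y) < dl / 2) ->
  trajectory01 (Hn rh H) x1 x2 ->
  (forall t, 0 <= t <= 1 -> 1 <= rad (x1 t) (x2 t)) ->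
  cont_on01 th ->
  (forall t, 0 <= t <= 1 ->
       x1 t = rad (x1 t) (x2 t) * cos (th t) /\
       x2 t = rad (x1 t) (x2 t) * sin (th t)) ->
  forall t, 0 < t < 1 -> is_derive th t (dth_of (Hn rh H) x1 x2 t) /\
     Rabs (dth_of (Hn rh H) x1 x2 t) <= Rabs (fb H (th t)) + dl.
Proof.
  intros HC Haut Hd Hid Hrh Hunif [Hc1 [Hc2 Hder]] Hrad Hth Hrep t Ht.
  destruct (Hder t Ht) as [D1 D2].
  split.
  { unfold dth_of. apply lift_deriv; auto.
    apply cont01_interior; auto.
    exists (Rmin t (1 - t)). split. apply Rmin_pos; lra.
    intros s Hs. pose proof (Rmin_l t (1 - t)). pose proof (Rmin_r t (1 - t)).
    apply Rabs_lt_between' in Hs.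
    split. pose proof (Hrad s ltac:(lra)). lra. apply Hrep. lra. }
  unfold dth_of, XH1, XH2.
  set (X := x1 t). set (Y := x2 t). set (R0 := rad X Y).
  assert (HR : 1 <= R0) by (apply Hrad; lra).
  destruct (Hrep t ltac:(lra)) as [E1 E2]. fold X Y R0 in E1, E2.
  set (a := th t) in *.
  replace (X * - d_x (Hn rh H) t X Y - Y * d_y (Hn rh H) t X Y) with
     (- (X * d_x (Hn rh H) t X Y + Y * d_y (Hn rh H) t X Y)) by ring.
  rewrite Hn_radial; auto. fold R0.
  set (s := phin rh R0 * R0).
  assert (Hs : s = 1 + rh (R0 - 1)) by (unfold s, phin; field; lra).
  assert (HpX : phin rh R0 * X = s * cos a) by (unfold s; rewrite E1 at 1; ring).
  assert (HpY : phin rh R0 * Y = s * sin a) by (unfold s; rewrite E2 at 1; ring).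
  rewrite HpX, HpY.
  set (gx := d_x H t (s * cos a) (s * sin a)). set (gy := d_y H t (s * cos a) (s * sin a)).
  destruct (Hrh (R0 - 1) ltac:(lra)) as [Hr1 [Hr2 Hr3]].
  set (dr := Derive rh (R0 - 1)) in *.
  replace (- (dr * (X * gx + Y * gy)) / R0 ^ 2) with (- dr * (cos a * gx + sin a * gy) / R0).
  2:{ rewrite E1 at 1. rewrite E2 at 1. field. lra. }
  assert (B1 : Rabs (- dr * (cos a * gx + sin a * gy) / R0) <= Rabs (cos a * gx + sin a * gy)).
  { unfold Rdiv. rewrite !Rabs_mult, Rabs_Ropp, Rabs_inv, (Rabs_right R0) by lra.
    apply (Rmult_le_reg_r R0). lra.
    rewrite Rmult_assoc, Rinv_l, Rmult_1_r by lra.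
    pose proof (Rabs_pos (cos a * gx + sin a * gy)).
    assert (Rabs dr * Rabs (cos a * gx + sin a * gy) <= 1 * Rabs (cos a * gx + sin a * gy))
      by (apply Rmult_le_compat_r; lra).
    assert (1 * Rabs (cos a * gx + sin a * gy) <= R0 * Rabs (cos a * gx + sin a * gy))
      by (apply Rmult_le_compat_r; lra). lra. }
  destruct (Haut t a) as [A1 A2].
  assert (Hf : fb H a = - (cos a * d_x H t (cos a) (sin a) + sin a * d_y H t (cos a) (sin a))).
  { unfold fb. rewrite A1, A2. reflexivity. }
  pose proof (COS_bound a). pose proof (SIN_bound a).
  assert (Ht2 : Rabs (t - t) < eta).
  { rewrite Rminus_diag, Rabs_R0. destruct (Hrh 0 ltac:(lra)) as [? [? _]]. lra. }
  assert (Hs1 : s - 1 = rh (R0 - 1)) by (rewrite Hs; ring).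
  assert (Hcx : Rabs (s * cos a - cos a) < eta).
  { replace (s * cos a - cos a) with ((s - 1) * cos a) by ring.
    rewrite Rabs_mult, Hs1.
    rewrite (Rabs_right (rh (R0 - 1))) by lra.
    assert (Rabs (cos a) <= 1) by (apply Rabs_le; lra).
    assert (rh (R0 - 1) * Rabs (cos a) <= rh (R0 - 1) * 1) by (apply Rmult_le_compat_l; lra). lra. }
  assert (Hcy : Rabs (s * sin a - sin a) < eta).
  { replace (s * sin a - sin a) with ((s - 1) * sin a) by ring.
    rewrite Rabs_mult, Hs1.
    rewrite (Rabs_right (rh (R0 - 1))) by lra.
    assert (Rabs (sin a) <= 1) by (apply Rabs_le; lra).
    assert (rh (R0 - 1) * Rabs (sin a) <= rh (R0 - 1) * 1) by (apply Rmult_le_compat_l; lra). lra. }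
  destruct (Hunif t (cos a) (sin a) t (s * cos a) (s * sin a) ltac:(lra) ltac:(lra) ltac:(lra) Ht2 Hcx Hcy)
    as [U1 U2].
  fold gx gy in U1, U2.
  set (hx := d_x H t (cos a) (sin a)) in *. set (hy := d_y H t (cos a) (sin a)) in *.
  assert (B2 : Rabs (cos a * gx + sin a * gy) <= Rabs (cos a * hx + sin a * hy) + Rabs (gx - hx) + Rabs (gy - hy)).
  { replace (cos a * gx + sin a * gy) with ((cos a * hx + sin a * hy) + (cos a * (gx - hx) + sin a * (gy - hy))) by ring.
    eapply Rle_trans. apply Rabs_triang. rewrite Rplus_assoc. apply Rplus_le_compat_l.
    eapply Rle_trans. apply Rabs_triang. rewrite !Rabs_mult.
    assert (Rabs (cos a) <= 1) by (apply Rabs_le; lra).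
    assert (Rabs (sin a) <= 1) by (apply Rabs_le; lra).
    pose proof (Rabs_pos (gx - hx)). pose proof (Rabs_pos (gy - hy)).
    apply Rplus_le_compat.
    rewrite <- (Rmult_1_l (Rabs (gx - hx))) at 2. apply Rmult_le_compat_r; lra.
    rewrite <- (Rmult_1_l (Rabs (gy - hy))) at 2. apply Rmult_le_compat_r; lra. }
  rewrite Hf, Rabs_Ropp. lra.
Qed.

Lemma cos_p2 x : cos (x + 2*PI) = cos x.
Proof. rewrite cos_plus, cos_2PI, sin_2PI. ring. Qed.
Lemma sin_p2 x : sin (x + 2*PI) = sin x.
Proof. rewrite sin_plus, cos_2PI, sin_2PI. ring. Qed.

Lemma fb_per H x : fb H (x + 2*PI) = fb H x.
Proof. unfold fb. rewrite cos_p2, sin_p2. reflexivity. Qed.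

Lemma gen_deriv (A B : R -> R) th a b : is_derive A th a -> is_derive B th b ->
  is_derive (fun u => - (cos u * A u + sin u * B u)) th
    (- (- sin th * A th + cos th * a + cos th * B th + sin th * b)).
Proof.
  intros HA HB. auto_derive.
  - repeat split; eexists; eassumption.
  - replace (Derive (fun x => A x) th) with a by (symmetry; apply is_derive_unique; exact HA).
    replace (Derive (fun x => B x) th) with b by (symmetry; apply is_derive_unique; exact HB).
    ring.
Qed.

Definition circ_d (F : R -> R -> R -> R) (th : R) :=
  d_x F 0 (cos th) (sin th) * (- sin th) + d_y F 0 (cos th) (sin th) * cos th.

Definition Dfb (H : R -> R -> R -> R) th :=
  - (- sin th * d_x H 0 (cos th) (sin th) + cos th * circ_d (d_x H) th
     + cos th * d_y H 0 (cos th) (sin th) + sin th * circ_d (d_y H) th).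

Lemma circ_is_derive (F : R -> R -> R -> R) th : Ck3 1 F ->
  is_derive (fun u => F 0 (cos u) (sin u)) th (circ_d F th).
Proof.
  intros HF. unfold circ_d. apply circ_deriv. apply C1_diff; auto.
Qed.

Lemma fb_deriv H th : Ck3 2 H -> is_derive (fb H) th (Dfb H th).
Proof.
  intros [_ [_ [_ [Hx Hy]]]].
  apply (gen_deriv (fun u => d_x H 0 (cos u) (sin u)) (fun u => d_y H 0 (cos u) (sin u))).
  apply circ_is_derive; auto. apply circ_is_derive; auto.
Qed.

Lemma cont_circ (F : R -> R -> R -> R) th : continuous3 F ->
  continuity_pt (fun u => F 0 (cos u) (sin u)) th.
Proof.
  intros HF. apply (cont3_comp F (fun _ => 0) cos sin th HF).
  apply continuity_pt_const. intros ? ?; auto. apply continuity_cos. apply continuity_sin.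
Qed.

Lemma Dfb_cont H th : Ck3 2 H -> continuity_pt (Dfb H) th.
Proof.
  intros [_ [_ [_ [[Hx0 [_ [_ [Hxx Hxy]]]] [Hy0 [_ [_ [Hyx Hyy]]]]]]]].
  unfold Dfb, circ_d.
  repeat first [ apply continuity_pt_opp | apply continuity_pt_plus | apply continuity_pt_mult
               | apply continuity_sin | apply continuity_cos | apply cont_circ; assumption ].
Qed.

Lemma fb_cont H th : Ck3 2 H -> continuity_pt (fb H) th.
Proof.
  intros HC. apply continuity_pt_filterlim.
  apply (ex_derive_continuous (K:=R_AbsRing) (V:=R_NormedModule)). eexists. apply fb_deriv; auto.
Qed.

Lemma tangency H th : Ck3 1 H -> (forall t x y, rad x y = 1 -> H t x y = 0) ->
  - sin th * d_x H 0 (cos th) (sin th) + cos th * d_y H 0 (cos th) (sin th) = 0.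
Proof.
  intros HC Hbd.
  assert (HD := circ_deriv (H 0) th _ _ (C1_diff H HC 0 (cos th) (sin th))).
  assert (HD0 : is_derive (fun s => H 0 (cos s) (sin s)) th 0).
  { eapply is_derive_ext. 2: apply (is_derive_const (K:=R_AbsRing) (V:=R_NormedModule) 0).
    intros u. simpl. symmetry. apply Hbd. apply rad_circ. }
  pose proof (is_derive_unique _ _ _ HD) as E1. pose proof (is_derive_unique _ _ _ HD0) as E2.
  rewrite E1 in E2. lra.
Qed.

Lemma goodg_fb H dl : Ck3 2 H -> 0 < dl -> goodg (fun u => Rabs (fb H u) + dl).
Proof.
  intros HC Hdl. split; [|split].
  - intros x. apply continuity_pt_plus. apply (continuity_pt_comp (fb H) Rabs).
    apply fb_cont; auto. apply Rcontinuity_abs. apply continuity_pt_const. intros ? ?; auto.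
  - intros x. pose proof (Rabs_pos (fb H x)). lra.
  - intros x. rewrite fb_per. reflexivity.
Qed.

Lemma zero_case H th0 : Ck3 2 H -> fb H th0 = 0 ->
  exists dl, 0 < dl /\ 1 < Gg (fun u => Rabs (fb H u) + dl) (2*PI).
Proof.
  intros HC Hz.
  destruct (cpt_eps (Dfb H) th0 (Dfb_cont H th0 HC) 1 ltac:(lra)) as [e0 [He0 Hc0]].
  set (L := Rabs (Dfb H th0) + 1).
  assert (HL : 0 < L) by (unfold L; pose proof (Rabs_pos (Dfb H th0)); lra).
  set (eta := Rmin (e0 / 2) 1).
  assert (Heta : 0 < eta /\ eta <= 1 /\ eta < e0).
  { unfold eta. pose proof (Rmin_l (e0/2) 1). pose proof (Rmin_r (e0/2) 1).
    split. apply Rmin_pos; lra. lra. }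
  assert (Hlip : forall u, th0 <= u <= th0 + eta -> Rabs (fb H u) <= L * (u - th0)).
  { intros u Hu.
    destruct (MVT_gen (fb H) th0 u (Dfb H)) as [c [Hc1 Hc2]].
    - intros; apply fb_deriv; auto.
    - intros; apply fb_cont; auto.
    - rewrite Hz, Rminus_0_r in Hc2. rewrite Hc2.
      rewrite Rmin_left in Hc1 by lra. rewrite Rmax_right in Hc1 by lra.
      assert (Rabs (c - th0) < e0) by (rewrite Rabs_right; lra).
      specialize (Hc0 c H0).
      assert (Rabs (Dfb H c) <= L).
      { unfold L. pose proof (Rabs_tri3 (Dfb H c) 0 (Dfb H th0)).
        rewrite Rminus_0_r in H1. unfold Rminus in H1 at 2. rewrite Rplus_0_l, Rabs_Ropp in H1. lra. }
      rewrite Rabs_mult, (Rabs_right (u - th0)) by lra.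
      apply Rmult_le_compat_r; lra. }
  set (dl := L * eta / exp L).
  assert (Hdl : 0 < dl) by (unfold dl; apply Rdiv_lt_0_compat; [apply Rmult_lt_0_compat; lra | apply exp_pos]).
  exists dl. split; auto.
  set (g := fun u => Rabs (fb H u) + dl).
  assert (Hg : goodg g) by (apply goodg_fb; auto).
  set (K := fun x => ln (L * (x - th0) + dl) / L).
  assert (HK : forall u, th0 <= u -> is_derive K u (/ (L * (u - th0) + dl))).
  { intros u Hu. unfold K. auto_derive.
    - assert (0 <= L * (u - th0)) by (apply Rmult_le_pos; lra). lra.
    - replace (u + - th0) with (u - th0) by ring. assert (0 <= L * (u - th0)) by (apply Rmult_le_pos; lra). field; repeat split; lra. }
  assert (HM : Gg g (th0 + eta) - K (th0 + eta) - (Gg g th0 - K th0) >= 0).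
  { destruct (MVT_gen (fun x => Gg g x - K x) th0 (th0 + eta) (fun u => / g u - / (L * (u - th0) + dl)))
      as [c [Hc1 Hc2]].
    - intros x Hx. rewrite Rmin_left in Hx by lra.
      apply (is_derive_minus (K:=R_AbsRing) (V:=R_NormedModule)). apply Gg_deriv; auto. apply HK; lra.
    - intros x Hx. rewrite Rmin_left in Hx by lra. apply continuity_pt_minus. apply Gg_cont; auto.
      apply continuity_pt_filterlim. apply (ex_derive_continuous (K:=R_AbsRing) (V:=R_NormedModule)).
      eexists. apply HK; lra.
    - rewrite Hc2. rewrite Rmin_left in Hc1 by lra. rewrite Rmax_right in Hc1 by lra.
      apply Rle_ge. apply Rmult_le_pos; [|lra].
      assert (g c <= L * (c - th0) + dl) by (unfold g; specialize (Hlip c Hc1); lra).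
      assert (0 < g c) by (destruct Hg as [_ [Hp _]]; apply Hp).
      assert (/ (L * (c - th0) + dl) <= / g c) by (apply Rinv_le_contravar; lra). lra. }
  assert (HKv : K (th0 + eta) - K th0 > 1).
  { unfold K. replace (th0 + eta - th0) with eta by ring. replace (th0 - th0) with 0 by ring.
    rewrite Rmult_0_r, Rplus_0_l.
    assert (ln (L * eta) < ln (L * eta + dl)) by (apply ln_increasing; [apply Rmult_lt_0_compat|]; lra).
    assert (E : L * eta = dl * exp L) by (unfold dl; field; apply Rgt_not_eq, exp_pos).
    rewrite E in H0 at 1. rewrite ln_mult, ln_exp in H0 by (auto; apply exp_pos).
    apply Rlt_gt. apply (Rmult_lt_reg_r L). auto.
    replace ((ln (L * eta + dl) / L - ln dl / L) * L) with (ln (L * eta + dl) - ln dl) by (field; lra).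
    lra. }
  assert (Gg g (th0 + eta) <= Gg g (th0 + 2*PI)) by (apply Gg_le; auto; pose proof PI2_1; lra).
  rewrite Gg_shift in H0 by auto.
  lra.
Qed.

Lemma goodg_fb0 H : Ck3 2 H -> (forall th, fb H th <> 0) -> goodg (fun u => Rabs (fb H u)).
Proof.
  intros HC Hnz. split; [|split].
  - intros x. apply (continuity_pt_comp (fb H) Rabs). apply fb_cont; auto. apply Rcontinuity_abs.
  - intros x. apply Rabs_pos_lt. auto.
  - intros x. rewrite fb_per. reflexivity.
Qed.

Lemma Gg_0 g : Gg g 0 = 0.
Proof. unfold Gg. rewrite RInt_point. reflexivity. Qed.

Lemma nozero_P0 H : Ck3 2 H -> (forall th, fb H th <> 0) ->
  (forall dl, 0 < dl -> Gg (fun u => Rabs (fb H u) + dl) (2*PI) <= 1) ->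
  Gg (fun u => Rabs (fb H u)) (2*PI) <= 1.
Proof.
  intros HC Hnz Hall.
  assert (Hg0 := goodg_fb0 H HC Hnz).
  destruct (continuity_ab_min (fun u => Rabs (fb H u)) 0 (2*PI)) as [mx [Hmx _]].
  { pose proof PI_RGT_0; lra. }
  { intros c _. destruct Hg0 as [Hc _]. apply Hc. }
  set (m := Rabs (fb H mx)).
  assert (Hm : 0 < m) by (apply Rabs_pos_lt; auto).
  set (P0 := Gg (fun u => Rabs (fb H u)) (2*PI)).
  apply Rnot_lt_le. intro Hlt.
  set (dl := (P0 - 1) * m ^ 2 / (4 * PI)).
  assert (HPI := PI_RGT_0).
  assert (Hdl : 0 < dl) by (unfold dl; apply Rdiv_lt_0_compat; [apply Rmult_lt_0_compat; [lra| apply pow_lt; lra]|lra]).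
  assert (Hgd := goodg_fb H dl HC Hdl).
  specialize (Hall dl Hdl).
  destruct (MVT_gen (fun x => Gg (fun u => Rabs (fb H u)) x - Gg (fun u => Rabs (fb H u) + dl) x) 0 (2*PI)
     (fun u => / Rabs (fb H u) - / (Rabs (fb H u) + dl))) as [c [Hc1 Hc2]].
  - intros x _. apply (is_derive_minus (K:=R_AbsRing) (V:=R_NormedModule)).
    apply (Gg_deriv (fun u => Rabs (fb H u))); auto. apply (Gg_deriv (fun u => Rabs (fb H u) + dl)); auto.
  - intros x _. apply continuity_pt_minus; apply Gg_cont; auto.
  - rewrite !Gg_0, Rminus_0_r, Rminus_0_r in Hc2.
    rewrite Rmin_left in Hc1 by lra. rewrite Rmax_right in Hc1 by lra.
    specialize (Hmx c Hc1). fold m in Hmx.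
    set (fc := Rabs (fb H c)) in *.
    assert (Hb : / fc - / (fc + dl) <= dl / m ^ 2).
    { replace (/ fc - / (fc + dl)) with (dl / (fc * (fc + dl))) by (field; lra).
      apply Rmult_le_compat_l. lra. apply Rinv_le_contravar. apply pow_lt; lra.
      simpl. rewrite Rmult_1_r. apply Rmult_le_compat; lra. }
    assert ((/ fc - / (fc + dl)) * (2 * PI) <= dl / m ^ 2 * (2 * PI)) by (apply Rmult_le_compat_r; lra).
    fold P0 in Hc2.
    assert (dl / m ^ 2 * (2 * PI) = (P0 - 1) / 2).
    { unfold dl. field. split; lra. }
    lra.
Qed.

Lemma pos_deriv_incr (F dF : R -> R) : (forall x, is_derive F x (dF x)) -> (forall x, 0 < dF x) ->
  forall x y, x < y -> F x < F y.
Proof.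
  intros HF Hp x y Hxy.
  destruct (MVT_gen F x y dF) as [c [_ Hc]].
  - intros; apply HF.
  - intros z _. apply continuity_pt_filterlim.
    apply (ex_derive_continuous (K:=R_AbsRing) (V:=R_NormedModule)). eexists; apply HF.
  - pose proof (Hp c). assert (0 < dF c * (y - x)) by (apply Rmult_lt_0_compat; lra). lra.
Qed.

Lemma inv_deriv (F Fi dF : R -> R) : (forall x, is_derive F x (dF x)) -> (forall x, 0 < dF x) ->
  (forall t, F (Fi t) = t) -> forall t, is_derive Fi t (/ dF (Fi t)).
Proof.
  intros HF Hp HFi t.
  assert (Hinc := pos_deriv_incr F dF HF Hp).
  assert (Hcont : forall x, continuity_pt F x).
  { intros x. apply continuity_pt_filterlim.
    apply (ex_derive_continuous (K:=R_AbsRing) (V:=R_NormedModule)). eexists; apply HF. }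
  assert (Hinj : forall x y, F x = F y -> x = y).
  { intros x y E. destruct (Rtotal_order x y) as [H|[H|H]]; auto.
    apply Hinc in H; lra. apply Hinc in H; lra. }
  assert (HFiF : forall x, Fi (F x) = x) by (intros x; apply Hinj; rewrite HFi; auto).
  assert (Hmon : forall a b, a <= b -> Fi a <= Fi b).
  { intros a b Hab. destruct (Rle_lt_dec (Fi a) (Fi b)) as [H|H]; auto.
    apply Hinc in H. rewrite !HFi in H. lra. }
  assert (HcFi : forall t, continuity_pt Fi t).
  { intros t0. set (lb := Fi t0 - 1). set (ub := Fi t0 + 1).
    apply (continuity_pt_recip_interv F Fi lb ub ltac:(unfold lb, ub; lra)).
    - intros x y _ Hxy _. apply Hinc; auto.
    - intros x _ _. unfold comp, id. apply HFi.
    - intros x H1 H2. apply Hmon in H1. apply Hmon in H2. rewrite HFiF in H1, H2. lra.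
    - intros; apply Hcont.
    - split.
      + apply (Rlt_le_trans _ (F (Fi t0))); [apply Hinc; unfold lb; lra | rewrite HFi; lra].
      + apply (Rle_lt_trans _ (F (Fi t0))); [rewrite HFi; lra | apply Hinc; unfold ub; lra]. }
  assert (Prf : forall a, Fi (t - 1) <= a <= Fi (t + 1) -> derivable_pt F a).
  { intros a _. apply ex_derive_Reals_0. eexists; apply HF. }
  assert (Hincr : Fi (t - 1) <= Fi t <= Fi (t + 1)) by (split; apply Hmon; lra).
  assert (HD := derivable_pt_lim_recip_interv F Fi (t - 1) (t + 1) t Prf (HcFi t)
     ltac:(lra) ltac:(lra) Hincr).
  assert (Hdp : derive_pt F (Fi t) (Prf (Fi t) Hincr) = dF (Fi t)).
  { apply derive_pt_eq_0. apply is_derive_Reals. apply HF. }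
  rewrite Hdp in HD.
  apply is_derive_Reals.
  replace (/ dF (Fi t)) with (1 / dF (Fi t)) by (field; apply Rgt_not_eq, Hp).
  apply HD.
  - intros x _. unfold comp, id. apply HFi.
  - apply Rgt_not_eq, Hp.
Qed.

Lemma Gg_nat g : goodg g -> forall n : nat,
  Gg g (2*PI * INR n) = INR n * Gg g (2*PI) /\ Gg g (- (2*PI * INR n)) = - (INR n * Gg g (2*PI)).
Proof.
  intros Hg n. induction n as [|n [IH1 IH2]].
  - simpl. rewrite Rmult_0_r, Ropp_0, Gg_0. split; ring.
  - rewrite S_INR. split.
    + replace (2*PI*(INR n + 1)) with (2*PI*INR n + 2*PI) by ring. rewrite Gg_shift, IH1 by auto. ring.
    + pose proof (Gg_shift g Hg (- (2 * PI * (INR n + 1)))) as E.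
      replace (- (2 * PI * (INR n + 1)) + 2 * PI) with (- (2*PI*INR n)) in E by ring.
      rewrite IH2 in E. lra.
Qed.

Lemma Gg_lin_bound g : goodg g -> forall x,
  Rabs (Gg g x - Gg g (2*PI) * x / (2*PI)) <= Gg g (2*PI).
Proof.
  intros Hg x. set (P := Gg g (2*PI)).
  assert (HPI := PI_RGT_0).
  assert (HP : 0 < P) by (unfold P; rewrite <- (Gg_0 g); apply Gg_incr; auto; lra).
  destruct (Rle_lt_dec 0 x) as [Hx|Hx].
  - destruct (nfloor_ex (x / (2*PI))) as [n [Hn1 Hn2]]. apply Rdiv_le_0_compat; lra.
    destruct (Gg_nat g Hg n) as [A _]. destruct (Gg_nat g Hg (S n)) as [B _].
    rewrite S_INR in B. fold P in A, B.
    assert (Hl : 2*PI*INR n <= x).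
    { apply (Rmult_le_reg_r (/ (2*PI))). apply Rinv_0_lt_compat; lra.
      replace (2*PI*INR n * / (2*PI)) with (INR n) by (field; lra). exact Hn1. }
    assert (Hu : x <= 2*PI*(INR n + 1)).
    { apply (Rmult_le_reg_r (/ (2*PI))). apply Rinv_0_lt_compat; lra.
      replace (2*PI*(INR n + 1) * / (2*PI)) with (INR n + 1) by (field; lra). unfold Rdiv in Hn2. lra. }
    apply (Gg_le g Hg) in Hl. apply (Gg_le g Hg) in Hu.
    rewrite A in Hl. rewrite B in Hu.
    assert (E : P * x / (2 * PI) = P * (x / (2*PI))) by (field; lra).
    rewrite E. apply Rabs_le. split.
    + assert (P * (x / (2*PI)) <= P * (INR n + 1)) by (apply Rmult_le_compat_l; lra). nra.
    + assert (P * INR n <= P * (x / (2*PI))) by (apply Rmult_le_compat_l; lra). nra.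
  - destruct (nfloor_ex (- x / (2*PI))) as [n [Hn1 Hn2]]. apply Rdiv_le_0_compat; lra.
    destruct (Gg_nat g Hg n) as [_ A]. destruct (Gg_nat g Hg (S n)) as [_ B].
    rewrite S_INR in B. fold P in A, B.
    assert (Hl : x <= - (2*PI*INR n)).
    { assert (2*PI*INR n <= - x); [|lra].
      apply (Rmult_le_reg_r (/ (2*PI))). apply Rinv_0_lt_compat; lra.
      replace (2*PI*INR n * / (2*PI)) with (INR n) by (field; lra). exact Hn1. }
    assert (Hu : - (2*PI*(INR n + 1)) <= x).
    { assert (- x <= 2*PI*(INR n + 1)); [|lra].
      apply (Rmult_le_reg_r (/ (2*PI))). apply Rinv_0_lt_compat; lra.
      replace (2*PI*(INR n + 1) * / (2*PI)) with (INR n + 1) by (field; lra). unfold Rdiv in Hn2. lra. }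
    apply (Gg_le g Hg) in Hl. apply (Gg_le g Hg) in Hu.
    rewrite A in Hl. rewrite B in Hu.
    assert (E : P * x / (2 * PI) = - (P * (- x / (2*PI)))) by (field; lra).
    rewrite E. apply Rabs_le. split.
    + assert (P * (- x / (2*PI)) <= P * (INR n + 1)) by (apply Rmult_le_compat_l; lra). nra.
    + assert (P * INR n <= P * (- x / (2*PI))) by (apply Rmult_le_compat_l; lra). nra.
Qed.

Lemma Gg_surj g : goodg g -> forall t, {x | Gg g x = t}.
Proof.
  intros Hg t.
  assert (HPI := PI_RGT_0).
  assert (HP : 0 < Gg g (2*PI)) by (rewrite <- (Gg_0 g); apply Gg_incr; auto; lra).
  destruct (nfloor_ex (Rabs t / Gg g (2*PI))) as [n [_ Hn]].
  { apply Rdiv_le_0_compat. apply Rabs_pos. auto. }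
  destruct (Gg_nat g Hg (S n)) as [A B]. rewrite S_INR in A, B.
  assert (Ht : Rabs t < (INR n + 1) * Gg g (2*PI)).
  { apply (Rmult_lt_reg_r (/ Gg g (2*PI))). apply Rinv_0_lt_compat; auto.
    replace ((INR n + 1) * Gg g (2 * PI) * / Gg g (2 * PI)) with (INR n + 1) by (field; lra).
    exact Hn. }
  destruct (IVT_gen (Gg g) (- (2 * PI * (INR n + 1))) (2 * PI * (INR n + 1)) t) as [x [_ Hx]].
  - intros z. apply Gg_cont; auto.
  - rewrite A, B. pose proof (Rabs_le_between' t).
    assert (0 <= INR n) by apply pos_INR.
    rewrite Rmin_left by nra. rewrite Rmax_right by nra.
    apply Rabs_le_between. lra.
  - exists x; exact Hx.
Qed.

Lemma sign_const (f : R -> R) : (forall x, continuity_pt f x) -> (forall x, f x <> 0) ->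
  (forall x, 0 < f x) \/ (forall x, f x < 0).
Proof.
  intros Hc Hnz.
  destruct (Rlt_or_le 0 (f 0)) as [Hp|Hn].
  - left. intros a. destruct (Rlt_or_le 0 (f a)) as [?|Ha]; auto.
    destruct Ha as [Ha|Ha]; [|exfalso; apply (Hnz a); auto].
    destruct (IVT_gen f 0 a 0 Hc) as [x [_ Hx]].
    { rewrite Rmin_right, Rmax_left by lra. lra. }
    exfalso; apply (Hnz x); auto.
  - right. destruct Hn as [Hn|Hn]; [|exfalso; apply (Hnz 0); auto].
    intros a. destruct (Rlt_or_le (f a) 0) as [?|Ha]; auto.
    destruct Ha as [Ha|Ha]; [|exfalso; apply (Hnz a); auto].
    destruct (IVT_gen f 0 a 0 Hc) as [x [_ Hx]].
    { rewrite Rmin_left, Rmax_right by lra. lra. }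
    exfalso; apply (Hnz x); auto.
Qed.

Lemma lim_from_bound (u : nat -> R) (l C : R) : 0 <= C ->
  (forall n, (1 <= n)%nat -> Rabs (u n - l) <= C / INR n) -> is_lim_seq u l.
Proof.
  intros HC Hb. apply is_lim_seq_spec. intros eps.
  destruct (nfloor_ex (C / eps)) as [N [_ HN]].
  { apply Rdiv_le_0_compat; auto. apply cond_pos. }
  exists (S N). intros n Hn.
  assert (Hn1 : (1 <= n)%nat) by lia.
  specialize (Hb n Hn1).
  apply le_INR in Hn. rewrite S_INR in Hn.
  assert (HnP : 0 < INR n) by (pose proof (pos_INR N); lra).
  pose proof (cond_pos eps).
  assert (H1 : C < eps * (INR N + 1)).
  { replace C with (eps * (C / eps)) by (field; lra). apply Rmult_lt_compat_l; auto. }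
  assert (H2 : eps * (INR N + 1) <= eps * INR n) by (apply Rmult_le_compat_l; lra).
  assert (C / INR n < eps).
  { apply (Rmult_lt_reg_r (INR n)); auto. replace (C / INR n * INR n) with C by (field; lra). lra. }
  lra.
Qed.

Lemma Ck3_S k f : Ck3 (S k) f -> Ck3 k f.
Proof.
  revert f. induction k as [|k IH]; intros f Hf.
  - destruct Hf as [Hc _]. exact Hc.
  - destruct Hf as [Hc [He [Ht [Hx Hy]]]]. split; [auto|split; [auto|]].
    split; [apply IH; auto|split; apply IH; auto].
Qed.

Lemma theta_bound g th sg : goodg g -> (forall t, Gg g (th t) = sg * t) ->
  forall t, Rabs (th t - 2 * PI * sg * t / Gg g (2*PI)) <= 2 * PI.
Proof.
  intros Hg Hth t.
  assert (HPI := PI_RGT_0).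
  set (P := Gg g (2*PI)).
  assert (HP : 0 < P) by (unfold P; rewrite <- (Gg_0 g); apply Gg_incr; auto; lra).
  pose proof (Gg_lin_bound g Hg (th t)) as B. rewrite Hth in B. fold P in B.
  replace (th t - 2 * PI * sg * t / P) with (- (2 * PI / P) * (sg * t - P * th t / (2 * PI))) by (field; lra).
  rewrite Rabs_mult, Rabs_Ropp, (Rabs_right (2 * PI / P)) by (apply Rle_ge, Rdiv_le_0_compat; lra).
  apply (Rmult_le_reg_r (P / (2 * PI))). apply Rdiv_lt_0_compat; lra.
  replace (2 * PI / P * Rabs (sg * t - P * th t / (2 * PI)) * (P / (2 * PI))) with
    (Rabs (sg * t - P * th t / (2 * PI))) by (field; lra).
  replace (2 * PI * (P / (2 * PI))) with P by (field; lra). exact B.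
Qed.

Lemma nozero_contra H :
  Ck3 2 H -> (forall t x y, rad x y = 1 -> H t x y = 0) ->
  (forall t a, d_x H t (cos a) (sin a) = d_x H 0 (cos a) (sin a) /\
               d_y H t (cos a) (sin a) = d_y H 0 (cos a) (sin a)) ->
  (exists r, is_boundary_rotation_number H r /\ Rabs r < 1) ->
  (forall th, fb H th <> 0) -> 1 < Gg (fun u => Rabs (fb H u)) (2*PI).
Proof.
  intros HC Hbd Haut [r [Hr Hr1]] Hnz.
  assert (HC1 : Ck3 1 H) by (apply Ck3_S; auto).
  set (g := fun u => Rabs (fb H u)).
  assert (Hg : goodg g) by (apply goodg_fb0; auto).
  assert (HPI := PI_RGT_0).
  set (P := Gg g (2*PI)).
  assert (HP : 0 < P) by (unfold P; rewrite <- (Gg_0 g); apply Gg_incr; auto; lra).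
  apply Rnot_le_lt. intro HP1.
  assert (Hsg : exists sg, (sg = 1 \/ sg = -1) /\ forall th, fb H th = sg * g th).
  { destruct (sign_const (fb H) (fun x => fb_cont H x HC) Hnz) as [Hp|Hn].
    - exists 1. split; auto. intros th. unfold g. rewrite Rabs_right. ring. apply Rle_ge, Rlt_le, Hp.
    - exists (-1). split; auto. intros th. unfold g. rewrite Rabs_left. ring. apply Hn. }
  destruct Hsg as [sg [Hsg1 Hsg2]].
  set (inv := fun t => proj1_sig (Gg_surj g Hg t)).
  assert (HFi : forall t, Gg g (inv t) = t) by (intros t; unfold inv; destruct (Gg_surj g Hg t); auto).
  assert (Hgp : forall x, 0 < g x) by (intro x; apply (proj1 (proj2 Hg))).
  assert (Hinv : forall t, is_derive inv t (/ / g (inv t))).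
  { apply (inv_deriv (Gg g) inv (fun x => / g x)).
    - intros x. apply Gg_deriv; auto.
    - intros x. apply Rinv_0_lt_compat; auto.
    - exact HFi. }
  set (ths := fun t => inv (sg * t)).
  assert (Hths : forall t, is_derive ths t (fb H (ths t))).
  { intros t. unfold ths.
    assert (HD := is_derive_comp inv (fun t => sg * t) t (/ / g (inv (sg * t))) sg (Hinv (sg * t))).
    assert (HD2 : is_derive (fun t => sg * t) t sg).
    { auto_derive; auto; ring. }
    specialize (HD HD2). rewrite Rinv_inv in HD.
    rewrite Hsg2. exact HD. }
  assert (Hcths : forall t, continuous ths t).
  { intros t. apply (ex_derive_continuous (K:=R_AbsRing) (V:=R_NormedModule)). eexists; apply Hths. }
  assert (Hlim := Hr (fun t => cos (ths t)) (fun t => sin (ths t)) ths).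
  assert (Hlim' : is_lim_seq (fun n : nat => (ths (INR n) - ths 0) / (2 * PI * INR n)) r).
  { apply Hlim; auto.
    intros t. destruct (Haut t (ths t)) as [A1 A2]. unfold XH1, XH2. rewrite A1, A2.
    pose proof (tangency H (ths t) HC1 Hbd) as T.
    pose proof (sin2_cos2 (ths t)) as CS. unfold Rsqr in CS.
    assert (F := Hths t). unfold fb in F.
    set (c := cos (ths t)) in *. set (s := sin (ths t)) in *.
    set (Ax := d_x H 0 c s) in *. set (Ay := d_y H 0 c s) in *.
    split.
    - assert (HD := is_derive_comp cos ths t (- sin (ths t)) _ (is_derive_cos (ths t)) (Hths t)).
      unfold fb in HD. fold c s Ax Ay in HD.
      replace Ay with (scal (- (c * Ax + s * Ay)) (- s)). exact HD.
      unfold scal; simpl; unfold mult; simpl.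
      assert (E : s * Ax = c * Ay) by lra.
      replace (- (c * Ax + s * Ay) * - s) with (c * (s * Ax) + s * s * Ay) by ring.
      rewrite E. transitivity (Ay * (s * s + c * c)). ring. rewrite CS; ring.
    - assert (HD := is_derive_comp sin ths t (cos (ths t)) _ (is_derive_sin (ths t)) (Hths t)).
      unfold fb in HD. fold c s Ax Ay in HD.
      replace (- Ax) with (scal (- (c * Ax + s * Ay)) c). exact HD.
      unfold scal; simpl; unfold mult; simpl.
      assert (E : c * Ay = s * Ax) by lra.
      replace (- (c * Ax + s * Ay) * c) with (- (c * c * Ax) - s * (c * Ay)) by ring.
      rewrite E. transitivity (- Ax * (s * s + c * c)). ring. rewrite CS; ring. }
  assert (Hlim2 : is_lim_seq (fun n : nat => (ths (INR n) - ths 0) / (2 * PI * INR n)) (sg / P)).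
  { apply (lim_from_bound _ _ 2). lra.
    intros n Hn.
    assert (HB : forall t, Gg g (ths t) = sg * t) by (intros t; unfold ths; apply HFi).
    pose proof (theta_bound g ths sg Hg HB (INR n)) as B1.
    pose proof (theta_bound g ths sg Hg HB 0) as B0.
    fold P in B1, B0. rewrite Rmult_0_r in B0. replace (ths 0 - 0 / P) with (ths 0) in B0 by (field; lra).
    apply le_INR in Hn. simpl in Hn.
    replace ((ths (INR n) - ths 0) / (2 * PI * INR n) - sg / P) with
      (((ths (INR n) - 2 * PI * sg * INR n / P) - ths 0) / (2 * PI * INR n)) by (field; lra).
    unfold Rdiv at 1. rewrite Rabs_mult, Rabs_inv, (Rabs_right (2 * PI * INR n)) by nra.
    apply (Rmult_le_reg_r (2 * PI * INR n)). nra.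
    rewrite Rmult_assoc, Rinv_l, Rmult_1_r by nra.
    replace (2 / INR n * (2 * PI * INR n)) with (4 * PI) by (field; lra).
    pose proof (Rabs_tri3 (ths (INR n) - 2 * PI * sg * INR n / P) (ths 0) 0).
    rewrite !Rminus_0_r in H0. lra. }
  apply is_lim_seq_unique in Hlim'. apply is_lim_seq_unique in Hlim2.
  rewrite Hlim' in Hlim2. injection Hlim2 as E.
  rewrite E in Hr1.
  assert (1 <= Rabs (sg / P)).
  { unfold Rdiv. rewrite Rabs_mult, Rabs_inv, (Rabs_right P) by lra.
    assert (Rabs sg = 1) by (destruct Hsg1 as [-> | ->]; unfold Rabs; destruct (Rcase_abs _); lra).
    rewrite H0, Rmult_1_l. rewrite <- Rinv_1. apply Rinv_le_contravar; lra. }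
  lra.
Qed.

Theorem lemma4p2
  (H : R -> R -> R -> R) (rho : nat -> R -> R)
  (H_smooth : smooth3 H)
  (H_per : forall t x y, H (t + 1) x y = H t x y)
  (H_bd : forall t x y, rad x y = 1 -> H t x y = 0)
  (X_bd_aut : forall t s x y, rad x y = 1 ->
      XH1 H t x y = XH1 H s x y /\ XH2 H t x y = XH2 H s x y)
  (H_rot : exists r, is_boundary_rotation_number H r /\ Rabs r < 1)
  (rho_smooth : forall n, (1 <= n)%nat -> smooth1 (rho n))
  (rho_id : forall n r, (1 <= n)%nat -> r <= 0 -> rho n r = r)
  (rho_zero : forall n r, (1 <= n)%nat -> / INR n <= r -> rho n r = 0)
  (rho_nonneg : forall n r, (1 <= n)%nat -> 0 <= r -> 0 <= rho n r)
  (rho_lip : forall n r, (1 <= n)%nat -> 0 <= r -> Rabs (Derive (rho n) r) <= 1)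
  (rho_small : forall n r, (1 <= n)%nat -> 0 <= r -> Rabs (rho n r) <= / INR n)
  (rho_der : forall n r, (1 <= n)%nat -> - / INR n <= Derive (rho n) r) :
  exists N : nat, forall n : nat, (N <= n)%nat ->
    forall x1 x2 : R -> R,
      trajectory01 (Hn (rho n) H) x1 x2 ->
      (forall t, 0 <= t <= 1 -> 1 <= rad (x1 t) (x2 t)) ->
      forall w, is_wind x1 x2 w -> Rabs w < 1.
Proof.
  assert (HC2 : Ck3 2 H) by apply H_smooth.
  assert (HC1 : Ck3 1 H) by apply H_smooth.
  assert (Haut : forall t a, d_x H t (cos a) (sin a) = d_x H 0 (cos a) (sin a) /\
               d_y H t (cos a) (sin a) = d_y H 0 (cos a) (sin a)).
  { intros t a. destruct (X_bd_aut t 0 (cos a) (sin a) (rad_circ a)) as [A1 A2].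
    unfold XH1, XH2 in A1, A2. split; lra. }
  assert (Hdl : exists dl, 0 < dl /\ 1 < Gg (fun u => Rabs (fb H u) + dl) (2*PI)).
  { destruct (classic (exists dl, 0 < dl /\ 1 < Gg (fun u => Rabs (fb H u) + dl) (2*PI))) as [Hy|Hno]; auto.
    exfalso.
    assert (Hall : forall dl, 0 < dl -> Gg (fun u => Rabs (fb H u) + dl) (2*PI) <= 1).
    { intros dl Hdl. apply Rnot_lt_le. intro Hlt. apply Hno. exists dl. auto. }
    destruct (classic (exists th0, fb H th0 = 0)) as [[th0 Hz]|Hnz].
    - destruct (zero_case H th0 HC2 Hz) as [dl [Hdl Hlt]].
      specialize (Hall dl Hdl). lra.
    - assert (Hnz' : forall th, fb H th <> 0) by (intros th Hth; apply Hnz; exists th; auto).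
      pose proof (nozero_P0 H HC2 Hnz' Hall).
      pose proof (nozero_contra H HC2 H_bd Haut H_rot Hnz'). lra. }
  destruct Hdl as [dl [Hdl HP]].
  destruct HC1 as [_ [_ [_ [Hx Hy]]]].
  destruct (cont3_unif (d_x H) Hx (-2) 2 (dl/2) ltac:(lra)) as [e1 [He1 U1]].
  destruct (cont3_unif (d_y H) Hy (-2) 2 (dl/2) ltac:(lra)) as [e2 [He2 U2]].
  set (eta := Rmin e1 e2).
  assert (Heta : 0 < eta) by (apply Rmin_pos; auto).
  destruct (nfloor_ex (/ eta)) as [N0 [_ HN0]].
  { left. apply Rinv_0_lt_compat; auto. }
  exists (S N0). intros n HnN x1 x2 Htraj Hrad w [th [Hthc [Hrep Hw]]].
  assert (Hn1 : (1 <= n)%nat) by (revert HnN; clear; lia).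
  assert (Hinvn : / INR n < eta).
  { apply le_INR in HnN. rewrite S_INR in HnN.
    assert (0 < INR n) by (pose proof (pos_INR N0); lra).
    rewrite <- (Rinv_inv eta). apply Rinv_lt_contravar.
    apply Rmult_lt_0_compat; auto. apply Rinv_0_lt_compat; auto. lra. }
  assert (Hb := traj_bound H (rho n) dl eta x1 x2 th (H_smooth 1%nat) Haut).
  assert (Hex : forall z, ex_derive (rho n) z).
  { intros z. exact (rho_smooth n Hn1 1%nat z). }
  specialize (Hb Hex (fun r => rho_id n r Hn1)).
  assert (Hrh : forall r, 0 <= r -> 0 <= rho n r /\ rho n r < eta /\ Rabs (Derive (rho n) r) <= 1).
  { intros r Hr. split. apply rho_nonneg; auto. split.
    pose proof (rho_small n r Hn1 Hr). pose proof (Rle_abs (rho n r)). lra.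
    apply rho_lip; auto. }
  specialize (Hb Hrh).
  assert (Hu : forall t x y t' x' y', -2 <= t <= 2 -> -2 <= x <= 2 -> -2 <= y <= 2 ->
     Rabs (t' - t) < eta -> Rabs (x' - x) < eta -> Rabs (y' - y) < eta ->
     Rabs (d_x H t' x' y' - d_x H t x y) < dl / 2 /\ Rabs (d_y H t' x' y' - d_y H t x y) < dl / 2).
  { intros t x y t' x' y' Ht Hx' Hy' H1 H2 H3.
    pose proof (Rmin_l e1 e2). pose proof (Rmin_r e1 e2). fold eta in H0, H4.
    split. apply U1; auto; lra. apply U2; auto; lra. }
  specialize (Hb Hu Htraj Hrad Hthc Hrep).
  assert (Hfin := final_wind (fun u => Rabs (fb H u) + dl) th (dth_of (Hn (rho n) H) x1 x2)
     (goodg_fb H dl HC2 Hdl) HP Hthc Hb).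
  rewrite Hw. assert (HPI := PI_RGT_0).
  unfold Rdiv. rewrite Rabs_mult, Rabs_inv, (Rabs_right (2 * PI)) by lra.
  apply (Rmult_lt_reg_r (2 * PI)). lra.
  rewrite Rmult_assoc, Rinv_l, Rmult_1_r by lra. lra.
Qed.
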